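(* Let $(K,\mathrm{val})$ be a valued field in which every strict unit admits a square root, let $A$ be a subring with $B\subseteq A\subseteq K$, $H=\mathrm{val}(A^\times)$, and let $\mathcal M$ be a quasi-quadratic module in $A$. Then: (1) $M_g^A(\mathcal M)$ is a quasi-quadratic module in $F$ for every $g\in G$; (2) if $g_1,g_2\in H\cup G_{\ge e}$ and $[\![g_1]\!]=[\![g_2]\!]$, then $M_{g_1}^A(\mathcal M)=M_{g_2}^A(\mathcal M)$; (3) if $g_1,g_2\in H\cup G_{\ge e}$, $\overline{g_1}=\overline{g_2}$ and $g_1\le g_2$, then $M_{g_1}^A(\mathcal M)\subseteq M_{g_2}^A(\mathcal M)$.
   Context: Let $(G,\le)$ be a totally ordered abelian group written multiplicatively with identity $e$; $G_{\ge e}=\{g\in G:g\ge e\}$, $G^2=\{g^2:g\in G\}$. Let $(K,\mathrm{val})$ be a valued field with surjective valuation $\mathrm{val}:K\to G\cup\{\infty\}$, valuation ring $B=\{x:\mathrm{val}(x)\ge e\}$, residue map $\pi:B\to F$, residue field $F$. A strict unit is $x\in B^\times$ with $\pi(x)=1$. For a subring $A$ with $B\subseteq A\subseteq K$ put $H=\mathrm{val}(A^\times)$ (a convex subgroup of $G$). For $g\in G$: $\overline g$ is its class in $G/G^2$, $[\![g]\!]$ its class in $G/H^2$. A quasi-quadratic module in a commutative ring $R$ is a subset $M\subseteq R$ with $M+M\subseteq M$ and $a^2M\subseteq M$ for all $a\in R$. A pseudo-angular component map is a map $\mathrm{p.an}:K^\times\to F^\times$ such that: (1) $\mathrm{p.an}(u)=\pi(u)$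 for $u\in B^\times$; (2) $\mathrm{p.an}(ux)=\pi(u)\mathrm{p.an}(x)$ for $u\in B^\times,x\in K^\times$; (3) for all $g\in G$, $c\in F^\times$ there is $w\in K$ with $\mathrm{val}(w)=g$, $\mathrm{p.an}(w)=c$; (4) for nonzero $x_1,x_2$ with $x_1+x_2\ne0$: if $\mathrm{val}(x_1)<\mathrm{val}(x_2)$ then $\mathrm{p.an}(x_1+x_2)=\mathrm{p.an}(x_1)$; if $\mathrm{val}(x_1)=\mathrm{val}(x_2)$ and $\mathrm{p.an}(x_1)+\mathrm{p.an}(x_2)\ne0$ then $\mathrm{val}(x_1+x_2)=\mathrm{val}(x_1)$ and $\mathrm{p.an}(x_1+x_2)=\mathrm{p.an}(x_1)+\mathrm{p.an}(x_2)$; (5) if $x,y\in K^\times$, $\overline{\mathrm{val}(x)}=\overline{\mathrm{val}(y)}$ and $\mathrm{p.an}(x)=\mathrm{p.an}(y)$ then $y=u^2x$ for some $u\in K^\times$; (6) for $a,u\in K^\times$ there is $k\in F^\times$ with $\mathrm{p.an}(au^2)=\mathrm{p.an}(a)k^2$. Such a map exists under the hypotheses; fix one. For a quasi-quadratic module $\mathcal M$ in $A$ and $g\in G$: $$M_g^A(\mathcal M)=\{\mathrm{p.an}(x):\ x\in\mathcal M\setminus\{0\},\ \mathrm{val}(x)=g\}\cup\{0\}\subseteq F.$$ *)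

(* Defs.v *)
From HB Require Import structures.
From mathcomp Require Import all_boot all_order all_algebra.
Set Implicit Arguments. Unset Strict Implicit. Unset Printing Implicit Defensive.
Import GRing.Theory.
Local Open Scope ring_scope.

Record oAbGroup := OAbGroup {
  oag_sort :> Type;
  gmul : oag_sort -> oag_sort -> oag_sort;
  gone : oag_sort;
  ginv : oag_sort -> oag_sort;
  gle : oag_sort -> oag_sort -> Prop;
  gmulA : forall a b c, gmul a (gmul b c) = gmul (gmul a b) c;
  gmulC : forall a b, gmul a b = gmul b a;
  gmul1 : forall a, gmul a gone = a;
  gmulV : forall a, gmul a (ginv a) = gone;
  gle_refl : forall a, gle a a;
  gle_trans : forall a b c, gle a b -> gle b c -> gle a c;
  gle_anti : forall a b, gle a b -> gle b a -> a = b;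
  gle_total : forall a b, gle a b \/ gle b a;
  gle_mul : forall a b c, gle a b -> gle (gmul a c) (gmul b c)
}.

Section ValDefs.
Variable G : oAbGroup.

(* order on G ∪ {∞}, with None = ∞ the top element *)
Definition ole (a b : option G) : Prop :=
  match a, b with
  | _, None => True
  | None, Some _ => False
  | Some x, Some y => gle x y
  end.
Definition olt (a b : option G) : Prop := ole a b /\ a <> b.

Definition same_class_mod_sq (S : G -> Prop) (g1 g2 : G) : Prop :=
  exists h, S h /\ g1 = gmul g2 (gmul h h).

Variable K : fieldType.

Definition is_valuation (val : K -> option G) : Prop :=
  [/\ forall x, val x = None <-> x = 0,
      forall x y gx gy, val x = Some gx -> val y = Some gy ->
        val (x * y) = Some (gmul gx gy),
      forall x y (g : option G), ole g (val x) -> ole g (val y) ->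
        ole g (val (x + y))
    & forall g : G, exists x, val x = Some g].

Definition valring (val : K -> option G) (x : K) : Prop := ole (Some (gone G)) (val x).

Variable F : fieldType.

(* residue map pi : B -> F onto the residue field (values outside B irrelevant):
   a surjective ring morphism on B whose kernel is the maximal ideal *)
Definition is_residue_map (val : K -> option G) (pi : K -> F) : Prop :=
  [/\ forall x y, valring val x -> valring val y -> pi (x + y) = pi x + pi y,
      forall x y, valring val x -> valring val y -> pi (x * y) = pi x * pi y,
      pi 1 = 1,
      forall x, valring val x -> (pi x = 0 <-> olt (Some (gone G)) (val x))
    & forall c, exists x, valring val x /\ pi x = c].

Definition Bunit (val : K -> option G) (x : K) : Prop := val x = Some (gone G).

Definition strict_unit (val : K -> option G) (pi : K -> F) (x : K) : Prop :=
  Bunit val x /\ pi x = 1.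

Definition is_pseudo_angular (val : K -> option G) (pi : K -> F) (pan : K -> F) : Prop :=
  (forall x, x != 0 -> pan x != 0) /\
  (forall u, Bunit val u -> pan u = pi u) /\
  (forall u x, Bunit val u -> x != 0 -> pan (u * x) = pi u * pan x) /\
  (forall (g : G) (c : F), c != 0 -> exists w, val w = Some g /\ pan w = c) /\
  (forall x1 x2, x1 != 0 -> x2 != 0 -> x1 + x2 != 0 ->
     (olt (val x1) (val x2) -> pan (x1 + x2) = pan x1) /\
     (val x1 = val x2 -> pan x1 + pan x2 != 0 ->
        val (x1 + x2) = val x1 /\ pan (x1 + x2) = pan x1 + pan x2)) /\
  (forall x y gx gy, x != 0 -> y != 0 -> val x = Some gx -> val y = Some gy ->
     same_class_mod_sq (fun _ => True) gx gy -> pan x = pan y ->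
     exists u, u != 0 /\ y = u ^+ 2 * x) /\
  (forall a u, a != 0 -> u != 0 ->
     exists k, k != 0 /\ pan (a * u ^+ 2) = pan a * k ^+ 2).

Definition is_overring (val : K -> option G) (A : K -> Prop) : Prop :=
  [/\ A 1,
      forall x y, A x -> A y -> A (x - y),
      forall x y, A x -> A y -> A (x * y)
    & forall x, valring val x -> A x].

Definition valunits (val : K -> option G) (A : K -> Prop) (g : G) : Prop :=
  exists a, A a /\ a != 0 /\ A a^-1 /\ val a = Some g.

Definition Mg (val : K -> option G) (pan : K -> F) (M : K -> Prop) (g : G) (c : F) : Prop :=
  c = 0 \/ exists x, M x /\ x != 0 /\ val x = Some g /\ pan x = c.

End ValDefs.

Definition quasi_quadratic_module (R : comNzRingType) (S : R -> Prop) (M : R -> Prop) : Prop :=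
  [/\ forall x, M x -> S x,
      forall x y, M x -> M y -> M (x + y)
    & forall a x, S a -> M x -> M (a ^+ 2 * x)].

(* Main.v *)
Require Import Defs.
From mathcomp Require Import all_boot all_order all_algebra.
From mathcomp Require Import ring.
From Stdlib Require Import Classical.
Local Open Scope ring_scope.
Import GRing.Theory.

Theorem mainTheorem5 (G : oAbGroup) (K F : fieldType)
  (val : K -> option G) (pi : K -> F) (pan : K -> F)
  (Hval : is_valuation val) (Hpi : is_residue_map val pi)
  (Hsqrt : forall x, strict_unit val pi x -> exists y, y ^+ 2 = x)
  (Hpan : is_pseudo_angular val pi pan)
  (A : K -> Prop) (HA : is_overring val A)
  (M : K -> Prop) (HM : quasi_quadratic_module A M) :
  let H := valunits val A in
  let adm := fun g : G => H g \/ gle (gone G) g in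
  (forall g : G, quasi_quadratic_module (fun _ : F => True) (Mg val pan M g)) /\
  (forall g1 g2 : G, adm g1 -> adm g2 -> same_class_mod_sq H g1 g2 ->
     forall c, Mg val pan M g1 c <-> Mg val pan M g2 c) /\
  (forall g1 g2 : G, adm g1 -> adm g2 -> same_class_mod_sq (fun _ => True) g1 g2 ->
     gle g1 g2 -> forall c, Mg val pan M g1 c -> Mg val pan M g2 c).
Proof.
move=> H adm.
case: Hval => Hv0 Hvm Hvadd Hvs.
case: Hpi => Hpadd Hpmul Hp1 Hp0 Hps.
case: Hpan => Hpnz [Hpu [Hpux [_ [Hpadd2 [_ Hpk]]]]].
case: HA => HA1 HAsub HAmul HAB.
case: HM => HMA HMadd HMsq.
have g1l : forall a : G, gmul (gone G) a = a by move=> a; rewrite gmulC gmul1.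
have gL : forall a h : G, gmul (gmul a h) (ginv h) = a.
  by move=> a h; rewrite -gmulA gmulV gmul1.
have gcan : forall a b c : G, gmul a b = gmul a c -> b = c.
  move=> a b c E.
  have : gmul (ginv a) (gmul a b) = gmul (ginv a) (gmul a c) by rewrite E.
  by rewrite !gmulA (gmulC (ginv a)) gmulV !g1l.
have sqe : forall b : G, gmul b b = gone G -> b = gone G.
  move=> b E; case: (gle_total b (gone G)) => Hb.
  - apply: gle_anti; first exact Hb.
    by have := gle_mul b Hb; rewrite E g1l.
  - apply: gle_anti; last exact Hb.
    by have := gle_mul b Hb; rewrite E g1l.
have vnz : forall x, x != 0 -> exists g, val x = Some g.
  move=> x xn; case E: (val x) => [g|]; first by exists g.
  by move/(proj1 (Hv0 x)): E => E'; rewrite E' eqxx in xn.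
have v1 : val 1 = Some (gone G).
  have [a Ea] := vnz 1 (oner_neq0 _).
  have := Hvm _ _ _ _ Ea Ea; rewrite mulr1 => E1.
  have [E] : Some a = Some (gmul a a) by rewrite -E1 -Ea.
  rewrite Ea; congr Some; apply: (gcan a); by rewrite gmul1 -E.
have vm1 : val (-1) = Some (gone G).
  have m1n : (-1 : K) != 0 by rewrite oppr_eq0 oner_eq0.
  have [b Eb] := vnz (-1) m1n.
  have := Hvm _ _ _ _ Eb Eb; rewrite mulrNN mulr1 v1 => -[E].
  by rewrite Eb (sqe b (esym E)).
have vBu : forall u x, Bunit val u -> val (u * x) = val x.
  move=> u x Hu; have [->|xn] := eqVneq x 0; first by rewrite mulr0.
  have [g Eg] := vnz x xn.
  by rewrite (Hvm _ _ _ _ Hu Eg) Eg g1l.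
have BuM : forall u v, Bunit val u -> Bunit val v -> Bunit val (u * v).
  by move=> u v Hu Hv; rewrite /Bunit vBu.
have Bu_ring : forall u, Bunit val u -> valring val u.
  by move=> u Hu; rewrite /valring Hu /=; apply: gle_refl.
have Bu_nz : forall u, Bunit val u -> u != 0.
  move=> u Hu; apply/eqP => E; move: Hu; rewrite /Bunit (proj2 (Hv0 u) E).
  discriminate.
have pi_Bu : forall u, valring val u -> pi u != 0 -> Bunit val u.
  move=> u Hu Hn; rewrite /Bunit.
  have Z : olt (Some (gone G)) (val u) -> False.
    by move=> Ho; move/eqP: Hn; apply; apply (proj2 (Hp0 u Hu)).
  move: Hu Z; rewrite /valring; case E: (val u) => [g|] /= Hg Z.
  - apply: NNPP => Hne; apply: Z; split => // H'; apply: Hne; by rewrite H'.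
  - by exfalso; apply: Z; split.
have vr0 : valring val 0 by rewrite /valring (proj2 (Hv0 0) erefl).
have vr1 : valring val 1 by rewrite /valring v1; apply: gle_refl.
have vrm1 : valring val (-1) by rewrite /valring vm1; apply: gle_refl.
have pi0 : pi 0 = 0.
  have := Hpadd 0 0 vr0 vr0; rewrite addr0 => E.
  by have := congr1 (fun t => t - pi 0) E; rewrite /= subrr addrK => <-.
have pim1 : pi (-1) = -1.
  have := Hpadd 1 (-1) vr1 vrm1; rewrite subrr pi0 Hp1 => E.
  by rewrite -(addKr 1 (pi (-1))) -E addr0.
have unit_of : forall k : F, k != 0 -> exists u, Bunit val u /\ pi u = k.
  move=> k kn; have [u [Hu Eu]] := Hps k; exists u; split=> //.
  by apply: pi_Bu => //; rewrite Eu.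
have adjust : forall x b g hb, M x -> x != 0 -> val x = Some g ->
    A b -> b != 0 -> val b = Some hb ->
    exists y, M y /\ y != 0 /\ val y = Some (gmul (gmul g hb) hb) /\ pan y = pan x.
  move=> x b g hb Mx xn vx Ab bn vb.
  have [k [kn Ek]] := Hpk x b xn bn.
  have [u [Hu Eu]] := unit_of k^-1 ltac:(by rewrite invr_eq0).
  have Mz : M (b ^+ 2 * x) := HMsq _ _ Ab Mx.
  have Bu2 : Bunit val (u ^+ 2) by rewrite expr2; apply: BuM.
  exists (u ^+ 2 * (b ^+ 2 * x)).
  split; first exact: HMsq _ _ (HAB _ (Bu_ring _ Hu)) Mz.
  split; first by rewrite mulf_neq0 // ?mulf_neq0 // ?expf_neq0 // Bu_nz.
  split.
    rewrite vBu // expr2 (Hvm _ _ _ _ (Hvm _ _ _ _ vb vb) vx).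
    by congr Some; rewrite gmulC gmulA.
  rewrite Hpux ?mulf_neq0 ?expf_neq0 // (mulrC (b ^+ 2)) Ek.
  rewrite expr2 (Hpmul _ _ (Bu_ring _ Hu) (Bu_ring _ Hu)) Eu.
  by field.
split.
  move=> g; split => //.
    move=> c1 c2 [->|[x1 [M1 [n1 [v1' p1]]]]]; first by rewrite add0r.
    move=> [->|[x2 [M2 [n2 [v2' p2]]]]]; first by rewrite addr0 /Mg; right; exists x1.
    have [E|cn] := eqVneq (c1 + c2) 0; first by rewrite /Mg; left.
    rewrite /Mg; right.
    have s_nz : x1 + x2 != 0.
      apply/eqP => E0; move/eqP: cn; apply.
      have Ex1 : x1 = (-1) * x2 by apply/eqP; rewrite mulN1r -addr_eq0 E0.
      by rewrite -p1 -p2 Ex1 Hpux // pim1 mulN1r addNr.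
    have [_ H2] := Hpadd2 x1 x2 n1 n2 s_nz.
    have [Hv Hp] := H2 ltac:(by rewrite v1' v2') ltac:(by rewrite p1 p2).
    exists (x1 + x2); split; first exact: HMadd.
    split=> //; split; [by rewrite Hv|by rewrite Hp p1 p2].
  move=> a c _ [->|[x [Mx [xn [vx px]]]]]; first by rewrite /Mg; left; rewrite mulr0.
  have [->|an] := eqVneq a 0; first by rewrite /Mg; left; rewrite expr2 !mul0r.
  have [u [Hu Eu]] := unit_of a an.
  have Bu2 : Bunit val (u ^+ 2) by rewrite expr2; apply: BuM.
  rewrite /Mg; right; exists (u ^+ 2 * x); split.
    by apply: HMsq => //; apply: HAB; apply: Bu_ring.
  split; first by rewrite mulf_neq0 // expf_neq0 // Bu_nz.
  split; first by rewrite vBu.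
  by rewrite Hpux // expr2 (Hpmul _ _ (Bu_ring _ Hu) (Bu_ring _ Hu)) Eu px expr2.
split.
  move=> g1 g2 _ _ [h [[a [Aa [an [Aai va]]]] Eg]] c.
  have ain : a^-1 != 0 by rewrite invr_eq0.
  have vai : val a^-1 = Some (ginv h).
    have [g' Eg'] := vnz _ ain.
    have := Hvm _ _ _ _ va Eg'; rewrite mulfV // v1 => -[E].
    by rewrite Eg'; congr Some; apply: (gcan h); rewrite -E gmulV.
  split; move=> [->|[x [Mx [xn [vx px]]]]]; try by rewrite /Mg; left.
  - rewrite /Mg; right.
    have [y [My [yn [vy py]]]] := adjust x a^-1 g1 (ginv h) Mx xn vx Aai ain vai.
    exists y; rewrite py; do !split => //.
    by rewrite vy Eg gmulA !gL.
  - rewrite /Mg; right.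
    have [y [My [yn [vy py]]]] := adjust x a g2 h Mx xn vx Aa an va.
    exists y; rewrite py; do !split => //.
    by rewrite vy Eg gmulA.
move=> g1 g2 _ _ [h [_ Eg]] Hle c [->|[x [Mx [xn [vx px]]]]]; first by rewrite /Mg; left.
have hh : gle (gmul h h) (gone G).
  have := gle_mul (ginv g2) Hle; rewrite Eg gmulV.
  by rewrite [gmul (gmul g2 _) _]gmulC gmulA [gmul (ginv g2) g2]gmulC gmulV g1l.
have hi : gle (gone G) (ginv h).
  have hle : gle h (gone G).
    case: (gle_total h (gone G)) => // Hh.
    apply: gle_trans hh.
    by have := gle_mul h Hh; rewrite g1l.
  by have := gle_mul (ginv h) hle; rewrite gmulV g1l.
have [b vb] := Hvs (ginv h).
have bn : b != 0.
  by apply/eqP => E; move: vb; rewrite (proj2 (Hv0 b) E).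
have Ab : A b by apply: HAB; rewrite /valring vb; exact: hi.
have [y [My [yn [vy py]]]] := adjust x b g1 (ginv h) Mx xn vx Ab bn vb.
rewrite /Mg; right; exists y; rewrite py; do !split => //.
by rewrite vy Eg gmulA !gL.
Qed.
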